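(* Let $d$ and $k$ be positive integers. For all sufficiently large $n$, $f(n,n-k,d,2) = n-2d-k+3$.
   Context: All graphs are finite, simple and undirected. The order of a graph is its number of vertices. For a graph $G$ and positive integers $d, r$, let $f_G(d,r)$ be the largest integer $t$ such that in every coloring of the edges of $G$ with $r$ colors there is a monochromatic subgraph (all of its edges of one color) with minimum degree at least $d$ and order at least $t$. For integers $n > K > d$, let $f(n,K,d,r)$ be the minimum of $f_G(d,r)$ over all graphs $G$ with $n$ vertices and minimum degree at least $K$. *)

(* Defs.v *)
From mathcomp Require Import all_boot.
Set Implicit Arguments. Unset Strict Implicit. Unset Printing Implicit Defensive.

Section Graphs.
Variable T : finType.

Definition simple_graph (E : {set T * T}) : bool :=
  [forall x, forall y, ((x, y) \in E) == ((y, x) \in E)] &&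
  [forall x, (x, x) \notin E].

Definition deg_in (E : {set T * T}) (S : {set T}) (v : T) : nat :=
  #|[set u in S | (v, u) \in E]|.

Definition mindeg_ge (E : {set T * T}) (K : nat) : bool :=
  [forall v, K <= deg_in E [set: T] v].

Definition edge_coloring (r : nat) (E : {set T * T}) (col : {ffun T * T -> 'I_r}) : bool :=
  [forall x, forall y, ((x, y) \in E) ==> (col (x, y) == col (y, x))].

Definition mono_sub (r : nat) (E : {set T * T}) (col : {ffun T * T -> 'I_r})
  (d : nat) (S : {set T}) (H : {set T * T}) (i : 'I_r) : bool :=
  [&& H \subset E, simple_graph H,
      [forall e in H, [&& e.1 \in S, e.2 \in S & col e == i]] &
      [forall v in S, d <= deg_in H S v]].

Definition good (E : {set T * T}) (d r t : nat) : bool :=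
  [forall col : {ffun T * T -> 'I_r}, edge_coloring E col ==>
     [exists S : {set T}, exists H : {set T * T}, exists i : 'I_r,
        mono_sub E col d S H i && (t <= #|S|)]].

(* f_G(d,r): the largest such t (t = 0 always works via the empty subgraph,
   and t <= |V(G)| necessarily) *)
Definition fG (E : {set T * T}) (d r : nat) : nat :=
  \max_(t < #|T|.+1 | good E d r t) t.

End Graphs.

(* f(n,K,d,r): minimum of f_G(d,r) over graphs G of order n with minimum
   degree >= K; every graph of order n is isomorphic to one on 'I_n.
   (Default value n if no such graph exists, irrelevant when n > K.) *)
Definition f (n K d r : nat) : nat :=
  \big[minn/n]_(E : {set 'I_n * 'I_n} | simple_graph E && mindeg_ge E K) fG E d r.

(* Main.v *)
Require Import Defs.
From mathcomp Require Import all_boot.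
From mathcomp Require Import zify.
Set Implicit Arguments. Unset Strict Implicit. Unset Printing Implicit Defensive.

Lemma cardU_le (T : finType) (A B : {set T}) : #|A :|: B| <= #|A| + #|B|.
Proof. by rewrite cardsU leq_subr. Qed.

Lemma card_sum (T : finType) (A : {set T}) (P : pred T) :
  #|[set y in A | P y]| = \sum_(y in A) P y.
Proof.
rewrite -sum1_card (eq_bigl (fun y => (y \in A) && P y)); last by move=> y; rewrite inE.
by rewrite big_mkcondr /=; apply: eq_bigr => y _; case: (P y).
Qed.

Section Lower.
Variable T : finType.
Variables (E : {set T * T}) (col : {ffun T * T -> 'I_2}) (d k : nat).
Hypothesis Esimple : simple_graph E.
Hypothesis Ecol : edge_coloring E col.
Hypothesis Emin : mindeg_ge E (#|T| - k).

Definition Hc (c : 'I_2) (S : {set T}) : {set T*T} :=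
  [set e in E | [&& e.1 \in S, e.2 \in S & col e == c]].
Definition goodset c (S : {set T}) := [forall v in S, d <= deg_in (Hc c S) S v].
Definition nb c (A : {set T}) x := [set u in A | ((x,u) \in E) && (col (x,u) == c)].
Definition Q c (X : {set T}) := [forall x in X, #|nb c (~: X) x| < d].

Lemma Esym x y : ((x,y) \in E) = ((y,x) \in E).
Proof. by case/andP: Esimple => /forallP /(_ x) /forallP /(_ y) /eqP. Qed.

Lemma Eirr x : (x,x) \notin E.
Proof. by case/andP: Esimple => _ /forallP. Qed.

Lemma colsym x y : (x,y) \in E -> col (x,y) = col (y,x).
Proof. by move: Ecol => /forallP /(_ x) /forallP /(_ y) /implyP H /H /eqP. Qed.

Lemma deg_Hc c (S : {set T}) v : v \in S -> deg_in (Hc c S) S v = #|nb c S v|.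
Proof.
move=> vS; rewrite /deg_in /nb; apply: eq_card => u; rewrite !inE /= vS.
by case: (u \in S).
Qed.

Lemma goodset_mono c (S : {set T}) : goodset c S -> mono_sub E col d S (Hc c S) c.
Proof.
move=> gS; apply/and4P; split.
- by apply/subsetP=> e; rewrite inE => /andP [].
- apply/andP; split.
  + apply/forallP=> x; apply/forallP=> y; rewrite !inE /= (Esym y x).
    case Exy: ((x,y) \in E); last by [].
    rewrite /= (colsym Exy).
    by case: (x \in S); case: (y \in S).
  + by apply/forallP=> x; rewrite inE negb_and Eirr.
- by apply/forall_inP=> e; rewrite inE => /andP [].
- exact: gS.
Qed.

Lemma peel c j : (exists S : {set T}, goodset c S /\ #|T| < #|S| + j) \/
                 (exists X : {set T}, #|X| = j /\ Q c X).
Proof.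
elim: j => [|j [[S [gS HS]]|[X [cX QX]]]].
- right; exists set0; split; first by rewrite cards0.
  by apply/forall_inP=> x; rewrite inE.
- by left; exists S; split => //; lia.
- case: (boolP (goodset c (~: X))) => [g|].
    left; exists (~: X); split => //; have := cardsC X; lia.
  rewrite /goodset negb_forall_in => /existsP [v /andP [vX]].
  rewrite -ltnNge (deg_Hc _ vX) => Hv.
  right; exists (v |: X); split.
    by rewrite cardsU1 -in_setC vX cX.
  apply/forall_inP=> x; rewrite !inE => /orP [/eqP ->|xX].
    apply: leq_ltn_trans Hv; apply: subset_leq_card; apply/subsetP=> u.
    by rewrite !inE negb_or => /andP [/andP [_ ->] ->].
  move/forall_inP: QX => /(_ x xX); apply: leq_ltn_trans.
  apply: subset_leq_card; apply/subsetP=> u.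
  by rewrite !inE negb_or => /andP [/andP [_ ->] ->].
Qed.


Lemma col2 (c : 'I_2) : (c == ord0) || (c == ord_max).
Proof. by case: c => [[|[|]]]. Qed.

Lemma Q_lt c (X : {set T}) x : Q c X -> x \in X -> #|nb c (~: X) x| < d.
Proof. by move/forall_inP => H /H. Qed.

Lemma XY_disj m (X Y : {set T}) x : #|X| = m -> #|Y| = m -> Q ord0 X -> Q ord_max Y ->
  2*m + 2*d + k <= #|T| -> x \in X -> x \in Y -> False.
Proof.
move=> cX cY QX QY big xX xY.
have H1 := Q_lt QX xX; have H2 := Q_lt QY xY.
have Hd : #|T| - k <= deg_in E [set: T] x by move/forallP: Emin => /(_ x).
have Hs : [set u in [set: T] | (x, u) \in E] \subset
   (X :|: Y) :|: (nb ord0 (~: X) x :|: nb ord_max (~: Y) x).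
  apply/subsetP=> u; rewrite !inE /= => Exu.
  case uX: (u \in X) => //=; case uY: (u \in Y) => //=.
  by rewrite Exu /=; apply: col2.
have := subset_leq_card Hs.
have := cardU_le (X :|: Y) (nb ord0 (~: X) x :|: nb ord_max (~: Y) x).
have := cardU_le X Y.
have := cardU_le (nb ord0 (~: X) x) (nb ord_max (~: Y) x).
rewrite /deg_in in Hd. lia.
Qed.

Lemma nb_swap c (X Y : {set T}) :
  \sum_(x in X) #|nb c Y x| = \sum_(y in Y) #|nb c X y|.
Proof.
rewrite /nb.
under eq_bigr => x _ do rewrite (card_sum Y (fun u => ((x,u) \in E) && (col (x,u) == c))).
under [RHS]eq_bigr => y _ do rewrite (card_sum X (fun u => ((y,u) \in E) && (col (y,u) == c))).
rewrite exchange_big; apply: eq_bigr => y _; apply: eq_bigr => x _.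
rewrite (Esym x y); case Eyx: ((y,x) \in E) => //=.
by rewrite (colsym Eyx).
Qed.

Lemma XY_count m (X Y : {set T}) : #|X| = m -> #|Y| = m -> Q ord0 X -> Q ord_max Y ->
  (forall x, x \in X -> x \notin Y) -> m * (m - (k-1)) <= m*(d-1) + m*(d-1).
Proof.
move=> cX cY QX QY disj.
have step : forall x, x \in X ->
    m - (k-1) <= #|nb ord0 Y x| + #|nb ord_max Y x| /\ #|nb ord0 Y x| <= d - 1.
  move=> x xX; set N := [set u in [set: T] | (x, u) \in E].
  have Hd : #|T| - k <= #|N| by move/forallP: Emin => /(_ x).
  have HC := cardsC N.
  have HD := cardsD1 x (~: N).
  have xN : x \in ~: N by rewrite !inE Eirr.
  rewrite xN /= in HD.
  have HI := cardsID N Y.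
  have sB : Y :\: N \subset (~: N) :\ x.
    apply/subsetP=> u; rewrite !inE => /andP [uN uY]; rewrite uN andbT.
    by apply/eqP=> ux; move: (disj x xX); rewrite -ux uY.
  have sA : Y :&: N \subset nb ord0 Y x :|: nb ord_max Y x.
    apply/subsetP=> u; rewrite !inE /= => /andP [uY Exu]; rewrite uY Exu /=.
    exact: col2.
  have s0 : nb ord0 Y x \subset nb ord0 (~: X) x.
    apply/subsetP=> u; rewrite !inE => /andP [uY ->]; rewrite andbT.
    by apply/negP=> uX; move: (disj u uX); rewrite uY.
  have := subset_leq_card sB; have := subset_leq_card sA;
  have := subset_leq_card s0; have := Q_lt QX xX.
  have := cardU_le (nb ord0 Y x) (nb ord_max Y x).
  lia.
have L : \sum_(x in X) (m - (k-1)) <= \sum_(x in X) (#|nb ord0 Y x| + #|nb ord_max Y x|).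
  by apply: leq_sum => x xX; case: (step x xX).
rewrite big_split /= sum_nat_const cX (nb_swap ord_max X Y) in L.
have L0 : \sum_(x in X) #|nb ord0 Y x| <= \sum_(x in X) (d - 1).
  by apply: leq_sum => x xX; case: (step x xX).
have L1 : \sum_(y in Y) #|nb ord_max X y| <= \sum_(y in Y) (d - 1).
  apply: leq_sum => y yY; have := Q_lt QY yY.
  have : nb ord_max X y \subset nb ord_max (~: Y) y.
    apply/subsetP=> u; rewrite !inE => /andP [uX ->]; rewrite andbT.
    exact: disj.
  move/subset_leq_card; lia.
rewrite !sum_nat_const cX cY in L0 L1.
lia.
Qed.

Lemma lower_col : 0 < d -> 0 < k -> 6*d + 3*k <= #|T| ->
  exists S H i, mono_sub E col d S H i && (#|T| - 2*d - k + 3 <= #|S|).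
Proof.
move=> d0 k0 big.
set m := 2*d + k - 2.
have fin : forall c S, goodset c S -> #|T| < #|S| + m ->
   exists S H i, mono_sub E col d S H i && (#|T| - 2*d - k + 3 <= #|S|).
  move=> c S gS HS; exists S, (Hc c S), c.
  rewrite goodset_mono //=; move: HS big; rewrite /m; move: (#|T|) (#|S|) => a b. lia.
case: (peel ord0 m) => [[S [gS HS]]|[X [cX QX]]]; first exact: fin gS HS.
case: (peel ord_max m) => [[S [gS HS]]|[Y [cY QY]]]; first exact: fin gS HS.
exfalso.
have disj : forall x, x \in X -> x \notin Y.
  move=> x xX; apply/negP=> xY.
  apply: (XY_disj cX cY QX QY _ xX xY); rewrite /m; lia.
have := XY_count cX cY QX QY disj.
have e : m - (k-1) = (d-1) + (d-1) + 1 by rewrite /m; lia.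
rewrite e -mulnDr leq_pmul2l; first lia.
rewrite /m; lia.
Qed.

End Lower.
Lemma big_min_le (I : finType) (P : pred I) (F : I -> nat) x0 i :
  P i -> \big[minn/x0]_(j | P j) F j <= F i.
Proof.
move=> Pi; have : i \in index_enum I by rewrite mem_index_enum.
elim: (index_enum I) => [|j r IH] //; rewrite inE big_cons.
case/orP => [/eqP <-|ir]; first by rewrite Pi geq_minl.
case: (P j) => /=; last exact: IH.
exact: leq_trans (geq_minr _ _) (IH ir).
Qed.

Lemma inj_card (T : finType) (A : {set T}) (g : T -> nat) a b :
  {in A &, injective g} -> (forall u, u \in A -> a <= g u < b) -> #|A| <= b - a.
Proof.
move=> ginj gr; rewrite cardE -(size_map g) -(size_iota a (b - a)).
apply: uniq_leq_size.
  rewrite map_inj_in_uniq ?enum_uniq // => u v; rewrite !mem_enum; exact: ginj.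
move=> z /mapP [u uA ->]; rewrite mem_enum in uA; rewrite mem_iota.
have := gr u uA; lia.
Qed.

Lemma card_itv_ge n (A : {set 'I_n}) a b : b <= n ->
  (forall u : 'I_n, a <= u < b -> u \in A) -> b - a <= #|A|.
Proof.
move=> bn HA; rewrite cardE -(size_map val) -(size_iota a (b - a)).
apply: uniq_leq_size; first exact: iota_uniq.
move=> z; rewrite mem_iota => hz.
have zn : z < n by lia.
apply/mapP; exists (Ordinal zn) => //; rewrite mem_enum; apply: HA => /=; lia.
Qed.

Lemma mod2 p a : 0 < p -> a < p + p -> a %% p = if a < p then a else a - p.
Proof.
move=> p0 ap; case: ifP => h; first exact: modn_small.
have pa : p <= a by rewrite leqNgt h.
rewrite -{1}(subnK pa) modnDr modn_small //; lia.
Qed.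

Lemma inj1 p x y1 y2 : x < p -> p <= y1 < p + p -> p <= y2 < p + p ->
  (y1 - x) %% p = (y2 - x) %% p -> y1 = y2.
Proof.
move=> xp h1 h2; have p0 : 0 < p by lia.
rewrite (mod2 p0 (_ : y1 - x < p + p)); last by lia.
rewrite (mod2 p0 (_ : y2 - x < p + p)); last by lia.
case: ifP; case: ifP; lia.
Qed.

Lemma inj2 p x1 x2 y : x1 < p -> x2 < p -> p <= y < p + p ->
  (y - x1) %% p = (y - x2) %% p -> x1 = x2.
Proof.
move=> h1 h2 hy; have p0 : 0 < p by lia.
rewrite (mod2 p0 (_ : y - x1 < p + p)); last by lia.
rewrite (mod2 p0 (_ : y - x2 < p + p)); last by lia.
case: ifP; case: ifP; lia.
Qed.

Definition cls p (u v : nat) : option nat :=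
  if (u < p) && (p <= v < p + p) then Some ((v - u) %% p)
  else if (v < p) && (p <= u < p + p) then Some ((u - v) %% p) else None.
Definition isedge p k (u v : nat) :=
  (u != v) && (if cls p u v is Some r then k - 1 <= r else true).
Definition isred p k d (u v : nat) :=
  if cls p u v is Some r then r < k + d - 2 else ~~ (u < p) && ~~ (v < p).

Lemma cls_sym p u v : cls p u v = cls p v u.
Proof.
rewrite /cls; case: (boolP ((u < p) && (p <= v < p + p))) => h1;
case: (boolP ((v < p) && (p <= u < p + p))) => h2 //; exfalso; lia.
Qed.

Lemma isedge_sym p k u v : isedge p k u v = isedge p k v u.
Proof. by rewrite /isedge cls_sym eq_sym. Qed.

Lemma isred_sym p k d u v : isred p k d u v = isred p k d v u.
Proof. by rewrite /isred cls_sym andbC. Qed.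

Lemma red_X p k d x u : x < p -> isedge p k x u -> isred p k d x u ->
  [/\ p <= u < p + p, k - 1 <= (u - x) %% p & (u - x) %% p < k + d - 2].
Proof.
move=> xp; rewrite /isedge /isred /cls xp /=.
case: ifP => [hu|hu]; first by move=> /andP [_ ?] ?; split.
case: ifP => [/andP [_ /andP [? _]]|_]; first lia.
by [].
Qed.

Lemma blue_Y p k d y u : p <= y < p + p -> isedge p k y u -> ~~ isred p k d y u ->
  [/\ u < p, k + d - 2 <= (y - u) %% p & (y - u) %% p < p].
Proof.
move=> hy; have yp : (y < p) = false by lia.
rewrite /isedge /isred /cls yp /=.
case: ifP => [/and3P [hu _ _]|hn] _ /=.
  rewrite -leqNgt => h; split => //; rewrite ltn_mod; lia.
by move/negbNE => up; rewrite up hy in hn.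
Qed.

Lemma nonedge p k u v : u != v -> ~~ isedge p k u v ->
  ((u < p) && (p <= v < p + p) && ((v - u) %% p < k - 1)) \/
  ((v < p) && (p <= u < p + p) && ((u - v) %% p < k - 1)).
Proof.
rewrite /isedge /cls => -> /=.
case: ifP => [h|_].
  by rewrite -ltnNge => H; left; rewrite H andbT.
case: ifP => [h|//].
by rewrite -ltnNge => H; right; rewrite H andbT.
Qed.

Section Constr.
Variables (n d k p : nat).
Hypotheses (d0 : 0 < d) (k0 : 0 < k) (hp : p = 2*d + k - 3).

Definition E0 : {set 'I_n * 'I_n} := [set e : 'I_n * 'I_n | isedge p k e.1 e.2].
Definition col0 : {ffun 'I_n * 'I_n -> 'I_2} :=
  [ffun e : 'I_n * 'I_n => if isred p k d e.1 e.2 then ord0 else ord_max].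

Lemma E0_simple : simple_graph E0.
Proof.
apply/andP; split.
  by apply/forallP=> x; apply/forallP=> y; rewrite !inE /= isedge_sym.
by apply/forallP=> x; rewrite inE /isedge /= eqxx.
Qed.

Lemma col0_ok : edge_coloring E0 col0.
Proof.
by apply/forallP=> x; apply/forallP=> y; apply/implyP=> _; rewrite !ffunE /= isred_sym.
Qed.

Lemma col0_red x y : (col0 (x, y) == ord0) = isred p k d x y.
Proof. by rewrite ffunE /=; case: ifP. Qed.

Lemma col0_blue x y : (col0 (x, y) == ord_max) = ~~ isred p k d x y.
Proof. by rewrite ffunE /=; case: ifP. Qed.

Lemma E0_mindeg : mindeg_ge E0 (n - k).
Proof.
apply/forallP=> u; rewrite /deg_in.
set N := [set v in [set: 'I_n] | (u, v) \in E0].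
set B := [set v : 'I_n | (u != v) && ~~ isedge p k u v].
have sNN : ~: N \subset u |: B.
  apply/subsetP=> v; rewrite !inE /= => h.
  by case: (eqVneq v u) => //= vu; rewrite eq_sym vu.
have cB : #|B| <= k - 1 - 0.
  apply: (inj_card (g := fun v : 'I_n => if u < p then (v - u) %% p else (u - v) %% p)).
    move=> v1 v2; rewrite !inE => /andP [n1 e1] /andP [n2 e2].
    case: (nonedge n1 e1) => /andP [/and3P [a1 b1 c1] _];
    case: (nonedge n2 e2) => /andP [/and3P [a2 b2 c2] _]; try (exfalso; lia).
      rewrite a1 => h; apply: val_inj; exact: (inj1 a1 (introT andP (conj b1 c1)) (introT andP (conj b2 c2)) h).
    have -> : (u < p) = false by rewrite ltnNge b1.
    move=> h; apply: val_inj; exact: (inj2 a1 a2 (introT andP (conj b1 c1)) h).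
  move=> v; rewrite !inE => /andP [n1 e1].
  case: (nonedge n1 e1) => /andP [/and3P [a1 b1 c1] h].
    by rewrite a1 h.
  by rewrite ifN ?h // -leqNgt b1.
have := subset_leq_card sNN; rewrite cardsU1.
have := cardsC N; rewrite card_ord.
set b := #|B| in cB *; set a := #|~: N|; set a2 := #|N|; case: (u \in B) => /= h1 h2; lia.
Qed.

Lemma redX (x : 'I_n) : x < p ->
  #|[set u | ((x, u) \in E0) && (col0 (x, u) == ord0)]| <= d - 1.
Proof.
move=> xp.
have -> : d - 1 = k + d - 2 - (k - 1) by lia.
apply: (inj_card (g := fun u : 'I_n => (u - x) %% p)).
  move=> u1 u2; rewrite !inE !col0_red /= => /andP [e1 r1] /andP [e2 r2] h.
  case: (red_X xp e1 r1) => a1 _ _; case: (red_X xp e2 r2) => a2 _ _.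
  by apply: val_inj; apply: (inj1 xp a1 a2 h).
move=> u; rewrite !inE col0_red /= => /andP [e1 r1].
by case: (red_X xp e1 r1) => _ -> ->.
Qed.

Lemma blueY (y : 'I_n) : p <= y < p + p ->
  #|[set u | ((y, u) \in E0) && (col0 (y, u) == ord_max)]| <= d - 1.
Proof.
move=> yp.
have -> : d - 1 = p - (k + d - 2) by lia.
apply: (inj_card (g := fun u : 'I_n => (y - u) %% p)).
  move=> u1 u2; rewrite !inE !col0_blue /= => /andP [e1 r1] /andP [e2 r2] h.
  case: (blue_Y yp e1 r1) => a1 _ _; case: (blue_Y yp e2 r2) => a2 _ _.
  by apply: val_inj; apply: (inj2 a1 a2 yp h).
move=> u; rewrite !inE col0_blue /= => /andP [e1 r1].
by case: (blue_Y yp e1 r1) => _ -> ->.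
Qed.

Lemma upper_S (S : {set 'I_n}) H i : p + p <= n ->
  mono_sub E0 col0 d S H i -> #|S| <= n - p.
Proof.
move=> big /and4P [HE _ /forall_inP Hcol /forall_inP Hdeg].
have Hsub : forall x, x \in S -> #|[set u in S | (x, u) \in H]| <=
     #|[set u | ((x, u) \in E0) && (col0 (x, u) == i)]|.
  move=> x xS; apply: subset_leq_card; apply/subsetP=> u; rewrite !inE => /andP [_ h].
  apply/andP; split; first by have := subsetP HE _ h; rewrite inE.
  by case/and3P: (Hcol _ h).
have : (i == ord0) || (i == ord_max) by case: (i) => [[|[|]]].
case/orP => /eqP ei; rewrite ei in Hsub.
- set X := [set u : 'I_n | u < p].
  have sS : S \subset ~: X.
    apply/subsetP=> x xS; rewrite !inE -leqNgt; case: (leqP p x) => // xp.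
    have := leq_trans (Hdeg x xS) (leq_trans (Hsub x xS) (redX xp)); lia.
  have cX : p - 0 <= #|X| by apply: card_itv_ge => [|u hu]; [lia | rewrite inE; lia].
  have := subset_leq_card sS; have := cardsC X; rewrite card_ord.
  set a := #|S|; set b := #|X|; set c := #|~: X|; lia.
- set Y := [set u : 'I_n | p <= u < p + p].
  have sS : S \subset ~: Y.
    apply/subsetP=> y yS; rewrite !inE; apply/negP => yp.
    have := leq_trans (Hdeg y yS) (leq_trans (Hsub y yS) (blueY yp)); lia.
  have cY : p + p - p <= #|Y| by apply: card_itv_ge => [|u hu]; [lia | rewrite inE; lia].
  have := subset_leq_card sS; have := cardsC Y; rewrite card_ord.
  set a := #|S|; set b := #|Y|; set c := #|~: Y|; lia.
Qed.

End Constr.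


Theorem theorem1p3 (d k : nat) : 0 < d -> 0 < k ->
  exists N : nat, forall n : nat, N <= n ->
    f n (n - k) d 2 = n - 2 * d - k + 3.
Proof.
move=> d0 k0; exists (6 * d + 3 * k) => n big.
set p := 2 * d + k - 3.
have hp : p = 2 * d + k - 3 by [].
rewrite /f; apply/eqP; rewrite eqn_leq; apply/andP; split.
- have e0s := E0_simple n k p.
  have e0m := E0_mindeg n d0 k0 hp.
  apply: leq_trans (@big_min_le _ _ (fun E => fG E d 2) n (E0 n k p) (introT andP (conj e0s e0m))) _.
  apply/bigmax_leqP => t /forallP /(_ (col0 n d k p)) /implyP /(_ (col0_ok n d k p)).
  case/existsP => S /existsP [H /existsP [i /andP [ms tS]]].
  have pn : p + p <= n by rewrite /p; lia.
  have := upper_S d0 k0 hp pn ms.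
  move: tS; set s := #|S|; rewrite /p; lia.
- apply: (big_ind (fun x => n - 2 * d - k + 3 <= x)).
  + lia.
  + by move=> x y hx hy; rewrite leq_min hx hy.
  move=> E /andP [Es Em].
  have tn : n - 2 * d - k + 3 < #|'I_n|.+1 by rewrite card_ord; lia.
  apply: leq_trans (leq_bigmax_cond (F := fun t : 'I_(#|'I_n|.+1) => nat_of_ord t) (Ordinal tn) _) => //.
  apply/forallP => col; apply/implyP => Hc.
  have Em' : mindeg_ge E (#|'I_n| - k) by rewrite card_ord.
  have big' : 6 * d + 3 * k <= #|'I_n| by rewrite card_ord.
  have [S [H [i /andP [ms tS]]]] := lower_col Es Hc Em' d0 k0 big'.
  apply/existsP; exists S; apply/existsP; exists H; apply/existsP; exists i.
  by rewrite ms /=; rewrite card_ord in tS.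
Qed.
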